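(* Assume the standing model below. Let $\mathbf{a}\in(0,\infty)^n$, let $\mathbf{x}=\mathbf{x}^*(\mathbf{a})=(\mathbf{s};\mathbf{r})$, and let $$v_i=a_i+\sum_j M^s_{ij}s_j+\sum_j M^d_{ij}r_j$$ be the total asset value of firm $i$. Suppose $v_i\neq d_i$ for all $i=1,\dots,n$, and define the solvency vector $\boldsymbol{\xi}\in\{0,1\}^n$ by $\xi_i=1$ if $v_i>d_i$ and $\xi_i=0$ otherwise. Then: 1. The matrix $$\mathbf{I}_{2n}-\operatorname{diag}\big((\boldsymbol{\xi};\mathbf{1}-\boldsymbol{\xi})\big)\begin{pmatrix}\mathbf{M}^s&\mathbf{M}^d\\ \mathbf{M}^s&\mathbf{M}^d\end{pmatrix}$$ is invertible. 2. $\mathbf{x}^*$ is differentiable at $\mathbf{a}$, with $2n\times n$ Jacobian $$\frac{\partial \mathbf{x}^*}{\partial \mathbf{a}}(\mathbf{a})=\left[\mathbf{I}_{2n}-\operatorname{diag}\big((\boldsymbol{\xi};\mathbf{1}-\boldsymbol{\xi})\big)\begin{pmatrix}\mathbf{M}^s&\mathbf{M}^d\\ \mathbf{M}^s&\mathbf{M}^d\end{pmatrix}\right]^{-1}\begin{pmatrix}\operatorname{diag}(\boldsymbol{\xi})\\ \operatorname{diag}(\mathbf{1}-\boldsymbol{\xi})\end{pmatrix}.$$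
   Context: Standing model (network valuation with cross-holdings). There are $n$ firms. Cross-holding matrices. $\mathbf{M}^s,\mathbf{M}^d\in\mathbb{R}^{n\times n}$ are matrices of equity and debt cross-holding fractions: firm $i$ holds fraction $M^s_{ij}$ of firm $j$'s equity and fraction $M^d_{ij}$ of firm $j$'s debt. They satisfy: - $M^s_{ii}=M^d_{ii}=0$ for all $i$; - $M^s_{ij},M^d_{ij}\ge 0$ for all $i,j$; - $\sum_i M^s_{ij}<1$ and $\sum_i M^d_{ij}<1$ for every $j$. Asset and debt data. Firm $i$ has external asset value $a_i>0$ and nominal debt $d_i>0$ (fixed). Fixed-point map. For $\mathbf{x}=(\mathbf{s};\mathbf{r})\in\mathbb{R}^{2n}$ (equity values $\mathbf{s}$ stacked over debt recovery values $\mathbf{r}$), define $\mathbf{g}=(g^s_1,\dots,g^s_n,g^r_1,\dots,g^r_n)$ by $$g^s_i(\mathbf{a},\mathbf{x})=\max\Big\{0,\;a_i+\sum_j M^s_{ij}s_j+\sum_j M^d_{ij}r_j-d_i\Big\},$$ $$g^r_i(\mathbf{a},\mathbf{x})=\min\Big\{d_i,\;a_i+\sum_j M^s_{ij}s_j+\sum_j M^d_{ij}r_j\Big\}.$$ For every $\mathbf{a}\in(0,\infty)^n$ the equation $\mathbf{x}=\mathbf{g}(\mathbf{a},\mathbf{x})$ has a unique (nonnegative) solution, denoted $\mathbf{x}^*(\mathbf{a})=(\mathbf{s}^*(\mathbf{a});\mathbf{r}^*(\mathbf{a}))$. Notation. $(\mathbf{u};\mathbf{w})$ denotes row-wise stacking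 of vectors, and $\operatorname{diag}(\mathbf{u})$ denotes the diagonal matrix with diagonal $\mathbf{u}$. *)

(* Defs.v *)
From HB Require Import structures.
From mathcomp Require Import all_boot all_order all_algebra.
From mathcomp Require Import all_classical all_reals all_analysis.
Set Implicit Arguments. Unset Strict Implicit. Unset Printing Implicit Defensive.
Import Order.TTheory GRing.Theory Num.Theory.
Local Open Scope ring_scope.

(* Vectors are row vectors: a : 'rV_n, x = (s ; r) : 'rV_(n + n) with
   s = lsubmx x (equity values) and r = rsubmx x (debt recovery values). *)

Definition crossholding (R : realType) (n : nat) (M : 'M[R]_n) : Prop :=
  (forall i, M i i = 0) /\ (forall i j, 0 <= M i j) /\
  (forall j, \sum_i M i j < 1).

Definition totval (R : realType) (n : nat) (Ms Md : 'M[R]_n) (a : 'rV[R]_n)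
  (x : 'rV[R]_(n + n)) (i : 'I_n) : R :=
  a 0 i + \sum_j Ms i j * lsubmx x 0 j + \sum_j Md i j * rsubmx x 0 j.

Definition gmap (R : realType) (n : nat) (Ms Md : 'M[R]_n) (d a : 'rV[R]_n)
  (x : 'rV[R]_(n + n)) : 'rV[R]_(n + n) :=
  row_mx (\row_i Num.max 0 (totval Ms Md a x i - d 0 i))
         (\row_i Num.min (d 0 i) (totval Ms Md a x i)).

Definition solv (R : realType) (n : nat) (Ms Md : 'M[R]_n) (d a : 'rV[R]_n)
  (x : 'rV[R]_(n + n)) : 'rV[R]_n :=
  \row_i (if d 0 i < totval Ms Md a x i then 1 else 0).

Definition sysmx (R : realType) (n : nat) (Ms Md : 'M[R]_n) (xi : 'rV[R]_n)
  : 'M[R]_(n + n) :=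
  1%:M - diag_mx (row_mx xi (const_mx 1 - xi)) *m block_mx Ms Md Ms Md.

Definition rhsmx (R : realType) (n : nat) (xi : 'rV[R]_n) : 'M[R]_(n + n, n) :=
  col_mx (diag_mx xi) (diag_mx (const_mx 1 - xi)).

(* Main.v *)
Require Import Defs.
From HB Require Import structures.
From mathcomp Require Import all_boot all_order all_algebra.
From mathcomp Require Import all_classical all_reals all_analysis.
From mathcomp Require Import ring lra.
Import Order.TTheory GRing.Theory Num.Theory numFieldNormedType.Exports.
Local Open Scope ring_scope.

Lemma decomp (R : realType) (n : nat) (Ms Md : 'M[R]_n) (xi : 'rV[R]_n)
  (ds dr Dl : 'rV[R]_n) :
  row_mx ds dr *m (sysmx Ms Md xi)^T = Dl *m (rhsmx xi)^T ->
  ds = (Dl + ds *m Ms^T + dr *m Md^T) *m diag_mx xi /\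
  dr = (Dl + ds *m Ms^T + dr *m Md^T) *m diag_mx (const_mx 1 - xi).
Proof.
rewrite /sysmx /rhsmx linearB /= trmx1 trmx_mul tr_diag_mx mulmxBr mulmx1.
rewrite diag_mx_row tr_block_mx mulmxA mul_row_block mul_row_block.
rewrite tr_col_mx !tr_diag_mx mul_mx_row !mulmx0 !addr0 !add0r opp_row_mx add_row_mx.
move=> /eq_row_mx [H1 H2]; split.
  by rewrite -addrA mulmxDl -H1 subrK.
by rewrite -addrA mulmxDl -H2 subrK.
Qed.
Lemma contr_zero (R : realType) (n : nat) (w : 'rV[R]_n) (A : 'M[R]_n) :
  (forall i j, 0 <= A i j) -> (forall j, \sum_i A i j < 1) ->
  (forall i, `|w 0 i| <= \sum_j A i j * `|w 0 j|) -> w = 0.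
Proof.
move=> A0 A1 Hw.
have H : \sum_i `|w 0 i| <= \sum_j (\sum_i A i j) * `|w 0 j|.
  apply: (le_trans (ler_sum _ (fun i _ => Hw i))).
  rewrite exchange_big /=; apply: ler_sum => j _; rewrite mulr_suml //.
have A1' j : 0 < 1 - \sum_i A i j by rewrite subr_gt0.
have H2 : \sum_j (1 - \sum_i A i j) * `|w 0 j| == 0.
  rewrite eq_le; apply/andP; split.
    under eq_bigr do rewrite mulrBl mul1r.
    by rewrite sumrB subr_le0.
  by apply: sumr_ge0 => j _; rewrite mulr_ge0 // subr_ge0 ltW.
have H3 := psumr_eq0P (fun j _ => mulr_ge0 (ltW (A1' j)) (normr_ge0 (w 0 j))) (eqP H2).
apply/rowP => j; rewrite mxE; apply/eqP; rewrite -normr_eq0.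
have := H3 j erefl; move/eqP; rewrite mulf_eq0 => /orP [|//].
by rewrite subr_eq0 => /eqP E; have := A1 j; rewrite -E ltxx.
Qed.

Lemma xi01 (R : realType) (n : nat) (Ms Md : 'M[R]_n) (d a : 'rV[R]_n) x i :
  let xi := solv Ms Md d a x in xi 0 i = 0 \/ xi 0 i = 1.
Proof. by rewrite /= /solv mxE; case: ifP; [right|left]. Qed.

Lemma unit_sys (R : realType) (n : nat) (Ms Md : 'M[R]_n) (xi : 'rV[R]_n) :
  crossholding Ms -> crossholding Md -> (forall i, xi 0 i = 0 \/ xi 0 i = 1) ->
  sysmx Ms Md xi \in unitmx.
Proof.
move=> [_ [Ms0 Ms1]] [_ [Md0 Md1]] Hxi.
rewrite -unitmx_tr -row_free_unit -kermx_eq0; apply/eqP/row_matrixP => i.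
rewrite row0; set u := row i _.
have Hu : row_mx (lsubmx u) (rsubmx u) *m (sysmx Ms Md xi)^T = 0 *m (rhsmx xi)^T.
  by rewrite hsubmxK mul0mx /u -row_mul mulmx_ker row0.
have [Hs Hr] := decomp _ _ _ _ _ _ _ _ Hu.

move: Hs Hr; rewrite add0r; set w := (_ + _) => Hs Hr.
have Hwdef : w = lsubmx u *m Ms^T + rsubmx u *m Md^T by [].
clearbody w.
have w0 : w = 0.
  apply: (@contr_zero _ _ w (\matrix_(i, j) (xi 0 j * Ms i j + (1 - xi 0 j) * Md i j))).
  - move=> i0 j; rewrite mxE; case: (Hxi j) => ->;
      by rewrite ?subr0 ?subrr !mul0r !mul1r ?add0r ?addr0.
  - move=> j; under eq_bigr do rewrite mxE.
    rewrite big_split /= -!mulr_sumr; case: (Hxi j) => ->;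
      by rewrite ?subr0 ?subrr !mul0r !mul1r ?add0r ?addr0.
  - move=> i0.
    have xi0 j : 0 <= xi 0 j by case: (Hxi j) => ->.
    have xi1 j : 0 <= 1 - xi 0 j by case: (Hxi j) => ->; rewrite ?subr0 ?subrr.
    rewrite {1}Hwdef Hs Hr !mul_mx_diag !mxE.
    apply: (le_trans (ler_normD _ _)).
    under [X in _ <= X]eq_bigr do rewrite mxE mulrDl.
    rewrite big_split /=; apply: lerD.
      apply: (le_trans (ler_norm_sum _ _ _)); apply: ler_sum => j _.
      rewrite !mxE !normrM (ger0_norm (xi0 j)) (ger0_norm (Ms0 _ _)).
      by rewrite le_eqVlt; apply/orP; left; apply/eqP; ring.
    apply: (le_trans (ler_norm_sum _ _ _)); apply: ler_sum => j _.
    rewrite !mxE !normrM (ger0_norm (xi1 j)) (ger0_norm (Md0 _ _)).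
    by rewrite le_eqVlt; apply/orP; left; apply/eqP; ring.
  rewrite -[u]hsubmxK Hs Hr w0 !mul0mx.
  apply/rowP => k; rewrite !mxE; by case: splitP => ? _; rewrite mxE.
Qed.
Lemma entry_le_norm (R : realType) m n (M : 'M[R]_(m,n)) i j : `|M i j| <= `|M|.
Proof.
rewrite [X in _ <= X]mx_normrE.
exact: (le_bigmax _ (fun ij : 'I_m * 'I_n => `|M ij.1 ij.2|) (i, j)).
Qed.

Lemma norm_le_bound (R : realType) m n (M : 'M[R]_(m,n)) c :
  0 <= c -> (forall i j, `|M i j| <= c) -> `|M| <= c.
Proof.
move=> c0 H; rewrite [X in X <= _]mx_normrE; apply: bigmax_le => // -[i j] _; exact: H.
Qed.

Lemma mulK_bound (R : realType) m n (K : 'M[R]_(m,n)) (h : 'rV[R]_m) :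
  `|h *m K| <= (\sum_i \sum_j `|K i j|) * `|h|.
Proof.
apply: norm_le_bound.
  by rewrite mulr_ge0 // sumr_ge0 // => i _; rewrite sumr_ge0.
move=> i j; rewrite mxE (le_trans (ler_norm_sum _ _ _)) //.
rewrite mulr_suml; apply: ler_sum => k _; rewrite normrM mulrC.
apply: ler_pM => //.
  rewrite (bigD1 j) //= lerDl sumr_ge0 //.
exact: entry_le_norm.
Qed.

Lemma mulK_cont (R : realType) m n (K : 'M[R]_(m,n)) :
  continuous (fun h : 'rV[R]_m => h *m K).
Proof.
move=> x; apply/(@cvgrPdist_lt _ _ _ (nbhs x) (nbhs_filter x)) => e e0.
set C := \sum_i \sum_j `|K i j|.
have C0 : 0 <= C by rewrite sumr_ge0 // => i _; rewrite sumr_ge0.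
have dp : 0 < e / (C + 1) by rewrite divr_gt0 // ltr_wpDl.
have := @cvgr_dist_lt _ _ _ (nbhs x) (nbhs_filter x) id x cvg_id _ dp.
apply: filterS => t /= Ht.
rewrite -mulmxBl (le_lt_trans (mulK_bound _ _ _ K _)) //.
rewrite -(@ltr_pM2r _ (C + 1)^-1) ?invr_gt0 ?ltr_wpDl //.
rewrite mulrAC (le_lt_trans _ Ht) //.
rewrite -/C ler_piMl //.
by rewrite ler_pdivrMr ?ltr_wpDl // mul1r lerDl.
Qed.
Lemma totval_shift (R : realType) (n : nat) (Ms Md : 'M[R]_n) (a h : 'rV[R]_n)
  (x dl : 'rV[R]_(n + n)) i :
  totval Ms Md (h + a) (x + dl) i =
  totval Ms Md a x i + (h + lsubmx dl *m Ms^T + rsubmx dl *m Md^T) 0 i.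
Proof.
rewrite /totval !mxE.
have E1 : \sum_j Ms i j * lsubmx (x + dl) 0 j =
   \sum_j Ms i j * lsubmx x 0 j + \sum_j lsubmx dl 0 j * Ms^T j i.
  rewrite -big_split; apply: eq_bigr => j _; by rewrite !mxE mulrDr [dl _ _ * _]mulrC.
have E2 : \sum_j Md i j * rsubmx (x + dl) 0 j =
   \sum_j Md i j * rsubmx x 0 j + \sum_j rsubmx dl 0 j * Md^T j i.
  rewrite -big_split; apply: eq_bigr => j _; by rewrite !mxE mulrDr [dl _ _ * _]mulrC.
rewrite E1 E2; ring.
Qed.

Theorem mainTheorem2 (R : realType) (n : nat) (Ms Md : 'M[R]_n)
  (d : 'rV[R]_n) (xs : 'rV[R]_n -> 'rV[R]_(n + n)) (a : 'rV[R]_n) :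
  crossholding Ms -> crossholding Md ->
  (forall i, 0 < d 0 i) ->
  (forall b : 'rV[R]_n, (forall i, 0 < b 0 i) ->
     [/\ xs b = gmap Ms Md d b (xs b),
         (forall k, 0 <= xs b 0 k) &
         (forall y : 'rV[R]_(n + n), (forall k, 0 <= y 0 k) -> y = gmap Ms Md d b y -> y = xs b)]) ->
  (forall i, 0 < a 0 i) ->
  (forall i, totval Ms Md a (xs a) i != d 0 i) ->
  let xi := solv Ms Md d a (xs a) in
  sysmx Ms Md xi \in unitmx /\
  (differentiable xs a /\
   jacobian xs a = (invmx (sysmx Ms Md xi) *m rhsmx xi)^T).
Proof.
move=> HMs HMd Hd Hxs Ha Hne xi.
have Hxi i : xi 0 i = 0 \/ xi 0 i = 1 by exact: xi01.
have Hu := unit_sys _ _ _ _ _ HMs HMd Hxi.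
split => //.
set S := sysmx Ms Md xi.
set K := (invmx S *m rhsmx xi)^T.
have [Hfix Hnn _] := Hxs a Ha.
pose v i := totval Ms Md a (xs a) i.
have Hs i : lsubmx (xs a) 0 i = Num.max 0 (v i - d 0 i).
  by rewrite {1}Hfix /gmap row_mxKl mxE.
have Hr i : rsubmx (xs a) 0 i = Num.min (d 0 i) (v i).
  by rewrite {1}Hfix /gmap row_mxKr mxE.
have Hv i : a 0 i <= v i.
  rewrite /v /totval -addrA lerDl addr_ge0 // sumr_ge0 // => j _;
    rewrite mulr_ge0 ?mxE //; [case: HMs => _ [] | case: HMd => _ []]; by [].
have Hxi' i : xi 0 i = if d 0 i < v i then 1 else 0 by rewrite /xi /solv mxE.
pose eps := \big[Num.min/1]_i Num.min `|v i - d 0 i| (a 0 i).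
have eps0 : 0 < eps.
  rewrite /eps; elim/big_ind: _ => // [x y x0 y0|i _]; first by rewrite lt_min x0.
  by rewrite lt_min normr_gt0 subr_eq0 Hne Ha.
have epsle i : eps <= `|v i - d 0 i| /\ eps <= a 0 i.
  have : eps <= Num.min `|v i - d 0 i| (a 0 i) by exact: bigmin_le.
  by rewrite le_min => /andP.
pose W := 1%:M + lsubmx K *m Ms^T + rsubmx K *m Md^T.
pose CW := \sum_i \sum_j `|W i j|.
have CW0 : 0 <= CW by rewrite sumr_ge0 // => i _; rewrite sumr_ge0.
have key : \forall h \near (0 : 'rV[R]_n), xs (h + a) = xs a + h *m K.
  near=> h.
  have Hh : (CW + 1) * `|h| < eps.
    rewrite mulrC -ltr_pdivlMr ?ltr_wpDl //.
    near: h; apply: (@cvgr0_norm_lt _ _ _ (nbhs 0) (nbhs_filter 0) id) => //; by rewrite divr_gt0 ?ltr_wpDl.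
  pose dl := h *m K.
  pose y := xs a + dl.
  pose w := h + lsubmx dl *m Ms^T + rsubmx dl *m Md^T.
  have wE : w = h *m W.
    rewrite /w /W /dl -[K]hsubmxK mul_mx_row row_mxKl row_mxKr.
    by rewrite !mulmxDr mulmx1 !mulmxA hsubmxK.
  have hn : `|h| <= (CW + 1) * `|h| by rewrite ler_peMl // lerDr.
  have wle i : `|w 0 i| < eps.
    apply: (le_lt_trans (entry_le_norm _ _ _ _ _ _)).
    rewrite wE (le_lt_trans (mulK_bound _ _ _ W _)) // (le_lt_trans _ Hh) //.
    by rewrite ler_wpM2r // -/CW lerDl.
  have hle i : `|h 0 i| < eps.
    exact: (le_lt_trans (entry_le_norm _ _ _ _ _ _) (le_lt_trans hn Hh)).
  have Hdec : row_mx (lsubmx dl) (rsubmx dl) *m S^T = h *m (rhsmx xi)^T.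
    by rewrite hsubmxK /dl /K -mulmxA -trmx_mul mulKVmx.
  have [Hds Hdr] := decomp _ _ _ _ _ _ _ _ Hdec.
  have dsE i : lsubmx dl 0 i = w 0 i * xi 0 i by rewrite {1}Hds mul_mx_diag mxE.
  have drE i : rsubmx dl 0 i = w 0 i * (1 - xi 0 i).
    by rewrite {1}Hdr mul_mx_diag !mxE.
  have tvE i : totval Ms Md (h + a) y i = v i + w 0 i.
    exact: totval_shift.
  have bpos i : 0 < (h + a) 0 i.
    rewrite mxE; have [_ ea] := epsle i; have := hle i.
    move=> /ltr_normlP [h1 h2]; lra.
  have Hcase i : [/\ lsubmx y 0 i = Num.max 0 (v i + w 0 i - d 0 i),
     rsubmx y 0 i = Num.min (d 0 i) (v i + w 0 i),
     0 <= lsubmx y 0 i & 0 <= rsubmx y 0 i].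
    have ylE : lsubmx y 0 i = lsubmx (xs a) 0 i + lsubmx dl 0 i by rewrite !mxE.
    have yrE : rsubmx y 0 i = rsubmx (xs a) 0 i + rsubmx dl 0 i by rewrite !mxE.
    rewrite ylE yrE dsE drE Hs Hr Hxi'.
    have [e1 e2] := epsle i; have := wle i; move=> /ltr_normlP [w1 w2].
    have vpos := Hv i; have dpos := Hd i; have apos := Ha i.
    case: ltP => [lt|ge].
      have ab : `|v i - d 0 i| = v i - d 0 i by rewrite ger0_norm // subr_ge0 ltW.
      rewrite ab in e1.
      have E1 : Num.max 0 (v i - d 0 i) = v i - d 0 i by apply: max_r; lra.
      have E2 : Num.max 0 (v i + w 0 i - d 0 i) = v i + w 0 i - d 0 i by apply: max_r; lra.
      have E3 : Num.min (d 0 i) (v i) = d 0 i by apply: min_l; lra.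
      have E4 : Num.min (d 0 i) (v i + w 0 i) = d 0 i by apply: min_l; lra.
      rewrite mulr1 subrr mulr0 addr0 ?E1 ?E2 ?E3 ?E4.
      split => //; lra.
    have lt : v i < d 0 i by rewrite lt_neqAle ge andbT; exact: Hne.
    have ab : `|v i - d 0 i| = d 0 i - v i by rewrite ltr0_norm ?subr_lt0 // opprB.
    rewrite ab in e1.
    have E1 : Num.max 0 (v i - d 0 i) = 0 by apply: max_l; lra.
    have E2 : Num.max 0 (v i + w 0 i - d 0 i) = 0 by apply: max_l; lra.
    have E3 : Num.min (d 0 i) (v i) = v i by apply: min_r; lra.
    have E4 : Num.min (d 0 i) (v i + w 0 i) = v i + w 0 i by apply: min_r; lra.
    rewrite mulr0 subr0 mulr1 addr0 ?E1 ?E2 ?E3 ?E4.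
    split => //; lra.
  have [_ _ Huniq] := Hxs _ bpos.
  apply/esym/Huniq.
    move=> k; case: (split_ordP k) => j ->.
      have -> : y 0 (lshift n j) = lsubmx y 0 j by rewrite [RHS]mxE.
      by case: (Hcase j).
    have -> : y 0 (rshift n j) = rsubmx y 0 j by rewrite [RHS]mxE.
    by case: (Hcase j).
  rewrite /gmap -[LHS]hsubmxK; congr row_mx; apply/rowP => i; rewrite [RHS]mxE;
    rewrite (_ : totval Ms Md (h + a) (xs a + h *m K) i = v i + w 0 i); try exact: tvE;
    by case: (Hcase i).
have HL : xs \o shift a = cst (xs a) + mulmxr K +o_ (0 : 'rV[R]_n) id.
  apply/eqaddoP => e e0; near=> h.
  have Hk : xs (h + a) = xs a + h *m K by near: h; exact: key.
  rewrite !fctE /= Hk subrr normr0 mulr_ge0 // ltW //.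
have Kc : continuous (mulmxr K : 'rV[R]_n -> 'rV[R]_(n + n)) by exact: (mulK_cont _ _ _ K).
have dd : 'd xs a = mulmxr K :> (_ -> _) by exact: diff_unique.
split.
  by apply/diff_locallyP; rewrite dd; split.
rewrite /jacobian; apply/matrixP => i j; rewrite mxE dd /= -rowE mxE //.
Unshelve. all: by end_near. Qed.
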